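(* Let $S=\mathbb{R}$ or $S=\mathbb{C}$ and let $X$ be a vector space over $S$, viewed as an algebra $a\colon\mathcal{M}_S(X)\to X$ of the multiset monad ($a(\sum_j s_jx_j)=\sum_j s_j\cdot x_j$). Then $\overline{\mathcal{M}_S}$-coalgebras (bases in the coalgebraic sense) on $X$ correspond bijectively to Hamel bases of $X$: a Hamel basis $B$ gives the coalgebra $b(x)=\sum_j s_j a_j$, where $x=\sum_j s_j\cdot a_j$ is the unique expansion of $x$ with $a_j\in B$; conversely, for a coalgebra $b$ the set $X_b=\{x\in X\mid b(x)=1x\}$ is a Hamel basis of $X$, and $b$ is the coordinate-expansion map with respect to it.
   Context: For a semiring $S$, the multiset monad $\mathcal{M}_S$ on $\mathbf{Sets}$ is $\mathcal{M}_S(X)=\{\varphi\colon X\to S\mid \mathrm{supp}(\varphi)\text{ finite}\}$, written as formal finite sums $\sum_i s_ix_i$; unit $\eta(x)=1x$; multiplication $\mu(\sum_i s_i\varphi_i)(x)=\sum_i s_i\cdot\varphi_i(x)$. Its Eilenberg–Moore algebras are $S$-modules. The induced comonad $\overline{\mathcal{M}_S}$ on modules sends a module $X$ to the free module $\mathcal{M}_S(X)$ on its underlying set, with counit $\varepsilon(\sum_j s_jx_j)=\sum_j s_j\cdot x_j$ (the actual sum in $X$) and comultiplication $\delta(\sum_j s_jx_j)=\sum_j s_j(1x_j)$. A $\overline{\mathcal{M}_S}$-coalgebra on $X$ is a module map $b\colon X\to\mathcal{M}_S(X)$ with $\varepsilon\circ b=\mathrm{id}$ and $\delta\circ b=\mathcal{M}_S(b)\circ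 b$. *)

(* Defs.v *)
From HB Require Import structures.
From mathcomp Require Import all_boot all_order all_algebra.
From Stdlib Require Import ClassicalEpsilon.
Set Implicit Arguments. Unset Strict Implicit. Unset Printing Implicit Defensive.
Import GRing.Theory.
Local Open Scope ring_scope.

Section Multiset.
Variable K : fieldType.

(* Elements of M_K(Y) are functions Y -> K with finite support. *)
Definition finsupp (Y : Type) (f : Y -> K) : Prop :=
  exists s : seq Y, forall y, f y <> 0 -> List.In y s.

(* A duplicate-free list enumerating exactly the support of f
   (meaningful when f is finitely supported), chosen classically. *)
Definition fsupp (Y : Type) (f : Y -> K) : seq Y :=
  epsilon (inhabits [::])
    (fun s => List.NoDup s /\ forall y, List.In y s <-> f y <> 0).

Definition meta (Y : eqType) (x : Y) : Y -> K :=
  fun y => if y == x then 1 else 0.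

Definition mmap (Y Z : Type) (g : Y -> Z) (f : Y -> K) : Z -> K :=
  fun z => \sum_(y <- fsupp f)
             (if excluded_middle_informative (g y = z) then f y else 0).

Definition mcounit (X : lmodType K) (f : X -> K) : X :=
  \sum_(x <- fsupp f) f x *: x.

Definition mcomult (X : lmodType K) (f : X -> K) : (X -> K) -> K :=
  mmap (@meta X) f.

Definition mlinear (X : lmodType K) (b : X -> X -> K) : Prop :=
  (forall x, finsupp (b x)) /\
  (forall (a : K) (x y : X), b (a *: x + y) = fun z => a * b x z + b y z).

Definition is_coalg (X : lmodType K) (b : X -> X -> K) : Prop :=
  mlinear b /\
  (forall x, mcounit (b x) = x) /\
  (forall x, mcomult (b x) = mmap b (b x)).

Definition is_expansion (X : lmodType K) (B : X -> Prop) (x : X) (f : X -> K) : Prop :=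
  finsupp f /\ (forall y, f y <> 0 -> B y) /\ mcounit f = x.

Definition hamel_basis (X : lmodType K) (B : X -> Prop) : Prop :=
  (forall x, exists f, is_expansion B x f) /\
  (forall f, is_expansion B 0 f -> forall y, f y = 0).

End Multiset.

(* Main.v *)
Require Import Defs.
From HB Require Import structures.
From mathcomp Require Import all_boot all_order all_algebra.
From Stdlib Require Import ClassicalEpsilon FunctionalExtensionality.
Local Open Scope ring_scope.
Import GRing.Theory.
Set Implicit Arguments. Unset Strict Implicit.

Lemma InE (T : eqType) (y : T) s : List.In y s <-> y \in s.
Proof.
elim: s => [|a s IH] //=; rewrite in_cons; split.
- by case=> [->|/IH ->]; rewrite ?eqxx ?orbT.
- by case/orP=> [/eqP ->|/IH]; [left|right].
Qed.

Lemma uniq_NoDup (T : eqType) (s : seq T) : uniq s -> List.NoDup s.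
Proof.
elim: s => [|a s IH] /=; first by constructor.
case/andP=> ha hs; constructor; last exact: IH.
by move/InE; rewrite (negbTE ha).
Qed.

Lemma NoDup_uniq (T : eqType) (s : seq T) : List.NoDup s -> uniq s.
Proof.
elim: s => [|a s IH] //= h; inversion h; subst.
by rewrite IH // andbT; apply/negP => /InE.
Qed.

Section L.
Variable K : fieldType.

Lemma fsuppP (Y : eqType) (f : Y -> K) : finsupp f ->
  uniq (fsupp f) /\ (forall y, (y \in fsupp f) = (f y != 0)).
Proof.
case=> s hs; rewrite /fsupp.
set P := (fun s0 : seq Y => List.NoDup s0 /\ (forall y, List.In y s0 <-> f y <> 0)).
have: exists s0, P s0.
  exists (undup [seq y <- s | f y != 0]); split.
    by apply: uniq_NoDup; apply: undup_uniq.
  move=> y; rewrite InE mem_undup mem_filter; split.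
    by case/andP=> /eqP.
  move=> h; apply/andP; split; first by apply/eqP.
  by apply/InE; apply: hs.
move/(epsilon_spec (inhabits [::]) P); case=> h1 h2; split.
  exact: NoDup_uniq.
move=> y; apply/idP/idP.
  by move/InE/h2/eqP.
by move/eqP/h2/InE.
Qed.

Lemma fs_sum (Y : eqType) (V : nmodType) (f : Y -> K) (G : Y -> V) (s : seq Y) :
  finsupp f -> uniq s -> (forall y, f y != 0 -> y \in s) ->
  (forall y, f y = 0 -> G y = 0) ->
  \sum_(y <- fsupp f) G y = \sum_(y <- s) G y.
Proof.
move=> /fsuppP [hu hm] us cov hG.
have -> : \sum_(y <- s) G y = \sum_(y <- s | f y != 0) G y.
  by rewrite [RHS]big_mkcond; apply: eq_bigr => y _; case: eqP => // /hG.
rewrite -[RHS]big_filter; apply: perm_big.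
apply: uniq_perm; rewrite ?filter_uniq //.
move=> y; rewrite !mem_filter hm; case e: (f y != 0) => //=.
by rewrite cov.
Qed.

Lemma finsupp_cover (Y : eqType) (f : Y -> K) : finsupp f ->
  exists s : seq Y, uniq s /\ forall y, f y != 0 -> y \in s.
Proof.
case=> s hs; exists (undup s); split; first exact: undup_uniq.
by move=> y /eqP /hs /InE; rewrite mem_undup.
Qed.

Lemma finsupp_lin (Y : eqType) (a : K) (f g : Y -> K) : finsupp f -> finsupp g ->
  finsupp (fun z => a * f z + g z).
Proof.
case=> s1 h1 [s2 h2]; exists (s1 ++ s2) => y h; apply/InE; rewrite mem_cat.
case: (f y =P 0) => [e|/h1/InE -> //]; rewrite e mulr0 add0r in h.
have /InE -> : List.In y s2 by apply: h2.
by rewrite orbT.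
Qed.

Variable X : lmodType K.

Lemma mcounit_lin (a : K) (f g : X -> K) : finsupp f -> finsupp g ->
  mcounit (fun z => a * f z + g z) = a *: mcounit f + mcounit g.
Proof.
move=> hf hg; case: (finsupp_cover (finsupp_lin a hf hg)) => _ _.
case: hf => s1 h1; case: hg => s2 h2.
set s := undup (s1 ++ s2).
have us : uniq s by apply: undup_uniq.
have cf : forall y, f y != 0 -> y \in s.
  by move=> y /eqP /h1 /InE; rewrite mem_undup mem_cat => ->.
have cg : forall y, g y != 0 -> y \in s.
  by move=> y /eqP /h2 /InE; rewrite mem_undup mem_cat orbC => ->.
have hf : finsupp f by exists s1.
have hg : finsupp g by exists s2.
rewrite /mcounit (fs_sum (s:=s) (finsupp_lin a hf hg)) //; last first.
- by move=> y ->; rewrite scale0r.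
- move=> y; case: (f y =P 0) => [e|/eqP/cf //]; rewrite e mulr0 add0r; exact: cg.
rewrite (fs_sum (s:=s) hf) //; last by move=> y ->; rewrite scale0r.
rewrite (fs_sum (s:=s) hg) //; last by move=> y ->; rewrite scale0r.
rewrite scaler_sumr -big_split /=; apply: eq_bigr => y _.
by rewrite scalerDl scalerA.
Qed.

Lemma finsupp_meta (x : X) : finsupp (meta K x).
Proof. by exists [:: x] => y; rewrite /meta; case: eqP => // -> _; left. Qed.

Lemma mcounit_meta (x : X) : mcounit (meta K x) = x.
Proof.
rewrite /mcounit (fs_sum (s:=[:: x]) (finsupp_meta x)) //.
- by rewrite big_seq1 /meta eqxx scale1r.
- by move=> y; rewrite /meta inE; case: (y =P x) => // _; rewrite eqxx.
- by move=> y ->; rewrite scale0r.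
Qed.

Lemma sum_meta (f : X -> K) z : finsupp f ->
  \sum_(u <- fsupp f) f u * meta K u z = f z.
Proof.
move=> hf; have [hu hm] := fsuppP hf.
case hz: (z \in fsupp f).
  rewrite (bigD1_seq z) //= /meta eqxx mulr1 big1 ?addr0 //.
  by move=> u /negbTE; rewrite eq_sym => ->; rewrite mulr0.
rewrite big1_seq; last first.
  move=> u /andP [_ hu']; rewrite /meta; case: eqP => [e|]; last by rewrite mulr0.
  by rewrite e hu' in hz.
by move: hz; rewrite hm => /negbFE /eqP.
Qed.

End L.

Section M.
Variable K : fieldType.
Variable X : lmodType K.

Lemma exp_uniq (B : X -> Prop) x f g : hamel_basis B ->
  is_expansion B x f -> is_expansion B x g -> f = g.
Proof.
move=> [_ hB] [f1 [f2 f3]] [g1 [g2 g3]].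
have H : is_expansion B 0 (fun z => (-1) * g z + f z).
  split; first exact: finsupp_lin.
  split.
    move=> y h; case: (g y =P 0) => [e|/g2 //]; apply: f2.
    by move: h; rewrite e mulr0 add0r.
  by rewrite mcounit_lin // f3 g3 scaleN1r addNr.
apply: functional_extensionality => z.
by have /eqP := hB _ H z; rewrite mulN1r addrC subr_eq0 => /eqP.
Qed.

Lemma b_zero (b : X -> X -> K) : mlinear b -> b 0 = fun _ => 0.
Proof.
move=> [_ hl]; have e := hl 1 0 0; rewrite scale1r addr0 in e.
apply: functional_extensionality => z.
have := congr1 (fun F => F z) e => /= /eqP; rewrite mul1r.
by rewrite -{1}[b 0 z]addr0 eq_sym => /eqP /addrI.
Qed.

Lemma b_sum (b : X -> X -> K) (s : seq X) (c : X -> K) : mlinear b ->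
  b (\sum_(u <- s) c u *: u) = fun z => \sum_(u <- s) c u * b u z.
Proof.
move=> hl; elim: s => [|a s IH].
  rewrite big_nil b_zero //; apply: functional_extensionality => z.
  by rewrite big_nil.
rewrite big_cons hl.2 IH; apply: functional_extensionality => z.
by rewrite big_cons.
Qed.

End M.

Theorem theorem3p2 (K : fieldType) (X : lmodType K) :
  (forall B : X -> Prop, hamel_basis B ->
     (exists b : X -> X -> K, forall x, is_expansion B x (b x)) /\
     (forall b : X -> X -> K, (forall x, is_expansion B x (b x)) ->
        is_coalg b /\ (forall x, B x <-> b x = meta K x))) /\
  (forall b : X -> X -> K, is_coalg b ->
     hamel_basis (fun x => b x = meta K x) /\
     (forall x, is_expansion (fun y => b y = meta K y) x (b x))).
Proof.
split.
  move=> B hB; split.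
    exists (fun x => epsilon (inhabits (fun _ => 0)) (is_expansion B x)) => x.
    by apply: epsilon_spec; apply: hB.1.
  move=> b hb.
  have hBm : forall x, B x <-> b x = meta K x.
    move=> x; split.
      move=> Bx; apply: (exp_uniq hB (hb x)); split; first exact: finsupp_meta.
      split; last exact: mcounit_meta.
      by move=> y; rewrite /meta; case: eqP => // ->.
    move=> e; have [_ [h _]] := hb x; apply: h; rewrite e /meta eqxx.
    by apply/eqP; exact: oner_neq0.
  split=> //; split.
    split; first by move=> x; case: (hb x).
    move=> a x y; apply: (exp_uniq hB (hb _)).
    have [x1 [x2 x3]] := hb x; have [y1 [y2 y3]] := hb y.
    split; first exact: finsupp_lin.
    split; last by rewrite mcounit_lin // x3 y3.
    move=> z h; case: (b y z =P 0) => [e|/y2 //]; apply: x2.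
    by move: h; rewrite e addr0 => /eqP; rewrite mulf_eq0 negb_or => /andP [_ /eqP].
  split; first by move=> x; case: (hb x) => _ [].
  move=> x; rewrite /mcomult /mmap; apply: functional_extensionality => z.
  have [x1 [x2 _]] := hb x; have [_ hm] := fsuppP x1.
  apply: eq_big_seq => u; rewrite hm => /eqP /x2 /hBm ->.
  by [].
move=> b [hl [hc hm]].
have binj : forall u v, b u = b v -> u = v.
  by move=> u v e; rewrite -(hc u) -(hc v) e.
have C : forall x y, b x y != 0 -> b y = meta K y.
  move=> x y hxy.
  have x1 := hl.1 x; have [hu hmem] := fsuppP x1.
  have yin : y \in fsupp (b x) by rewrite hmem.
  have := congr1 (fun F => F (b y)) (hm x); rewrite /mcomult /mmap /=.
  have -> : \sum_(u <- fsupp (b x))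
      (if excluded_middle_informative (b u = b y) then b x u else 0) = b x y.
    rewrite (bigD1_seq y) //=.
    destruct (excluded_middle_informative (b y = b y)) as [e0|n]; last by case: n.
    rewrite big1 ?addr0 // => u /eqP uy.
    by destruct (excluded_middle_informative (b u = b y)) as [e'|]; [case: (uy (binj _ _ e'))|].
  move=> e.
  case: (excluded_middle_informative (exists u, meta K u = b y)) => [[u hu']|nex].
    have uy : u = y by rewrite -(hc y) -hu' mcounit_meta.
    by rewrite -hu' uy.
  move: hxy; rewrite -e big1_seq ?eqxx // => u _.
  by case: excluded_middle_informative => [m|//]; case: nex; exists u.
have ex : forall x, is_expansion (fun y => b y = meta K y) x (b x).
  move=> x; split; first exact: hl.1.
  split; last exact: hc.
  by move=> y h; apply: (C x); apply/eqP.
split=> //; split; first by move=> x; exists (b x).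
move=> f [f1 [f2 f3]] y.
have e : b (mcounit f) = f.
  rewrite /mcounit b_sum //; apply: functional_extensionality => z.
  rewrite -[RHS](sum_meta z f1); apply: eq_big_seq => u.
  by rewrite (fsuppP f1).2 => /eqP /f2 ->.
by rewrite -e f3 b_zero.
Qed.
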